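(* Let $I$ be a quasipolar general ring and let $A$ be a two-sided ideal of $I$. Then $A$ is a quasipolar general ring.
   Context: A general ring is an associative ring not necessarily having an identity. For a general ring $K$ and $p,q\in K$, $p*q=p+q-pq$; $Q(K)=\{q\in K\mid p*q=0=q*p\text{ for some }p\in K\}$; $\mathrm{comm}_K(a)=\{x\in K\mid xa=ax\}$, $\mathrm{comm}_K^2(a)=\{x\in K\mid xy=yx\text{ for all }y\in\mathrm{comm}_K(a)\}$; $QN(K)=\{q\in K\mid qx\in Q(K)\text{ for all }x\in\mathrm{comm}_K(q)\}$. An element $a\in K$ is quasipolar in $K$ if there is an idempotent $p\in\mathrm{comm}_K^2(a)$ with $a+p\in Q(K)$ and $a-ap\in QN(K)$; $K$ is a quasipolar general ring if every element of $K$ is quasipolar in $K$ (all notions computed inside $K$). *)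

(* Defs.v *)
From HB Require Import structures.
From mathcomp Require Import all_boot all_order all_algebra.
Set Implicit Arguments. Unset Strict Implicit. Unset Printing Implicit Defensive.
Import GRing.Theory.
Local Open Scope ring_scope.

(* A general ring: an associative ring not necessarily having an identity.
   Additive group structure from a zmodType, plus an associative,
   bi-distributive multiplication (no unit required). *)
Record genRing := GenRing {
  gr_sort :> zmodType;
  gr_mul : gr_sort -> gr_sort -> gr_sort;
  gr_mulA : associative gr_mul;
  gr_mulDl : left_distributive gr_mul +%R;
  gr_mulDr : right_distributive gr_mul +%R
}.

Section GenRingDefs.
Variable K : genRing.
Local Notation "x ** y" := (gr_mul x y) (at level 40, left associativity).

(* Throughout, S : K -> Prop is the carrier of the general ring under
   consideration (a subring of K, e.g. K itself or an ideal of K);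
   all notions are computed inside S, i.e. quantifiers range over S. *)

Definition circ (p q : K) : K := p + q - p ** q.

Definition Qset (S : K -> Prop) (q : K) : Prop :=
  S q /\ exists p, S p /\ circ p q = 0 /\ circ q p = 0.

Definition comm (S : K -> Prop) (a : K) (x : K) : Prop :=
  S x /\ x ** a = a ** x.

Definition comm2 (S : K -> Prop) (a : K) (x : K) : Prop :=
  S x /\ forall y, comm S a y -> x ** y = y ** x.

Definition QN (S : K -> Prop) (q : K) : Prop :=
  S q /\ forall x, comm S q x -> Qset S (q ** x).

Definition quasipolar_in (S : K -> Prop) (a : K) : Prop :=
  exists p, comm2 S a p /\ p ** p = p /\ Qset S (a + p) /\ QN S (a - a ** p).

Definition quasipolar_ring (S : K -> Prop) : Prop :=
  forall a, S a -> quasipolar_in S a.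

Definition two_sided_ideal (S : K -> Prop) : Prop :=
  [/\ S 0,
      (forall x y, S x -> S y -> S (x - y)),
      (forall r x, S x -> S (r ** x)) &
      (forall r x, S x -> S (x ** r))].

End GenRingDefs.

(* Main.v *)
Require Import Defs.
From mathcomp Require Import all_boot all_order all_algebra.
Import GRing.Theory.
Local Open Scope ring_scope.

Section H.
Variable I : genRing.
Local Notation "x ** y" := (gr_mul x y) (at level 40, left associativity).

Lemma gmulr0 (x : I) : x ** 0 = 0.
Proof. have e := gr_mulDr x 0 0; rewrite addr0 in e.
by apply: (addrI (x ** 0)); rewrite -e addr0. Qed.
Lemma gmul0r (x : I) : 0 ** x = 0.
Proof. have e := gr_mulDl 0 0 x; rewrite addr0 in e.
by apply: (addrI (0 ** x)); rewrite -e addr0. Qed.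
Lemma gmulrN (x y : I) : x ** (- y) = - (x ** y).
Proof. by apply: (addrI (x ** y)); rewrite -gr_mulDr !subrr gmulr0. Qed.
Lemma gmulNr (x y : I) : (- x) ** y = - (x ** y).
Proof. by apply: (addrI (x ** y)); rewrite -gr_mulDl !subrr gmul0r. Qed.
Lemma gmulBl (x y z : I) : (x - y) ** z = x ** z - y ** z.
Proof. by rewrite gr_mulDl gmulNr. Qed.

Lemma ideal_add (A : I -> Prop) x y : two_sided_ideal A -> A x -> A y -> A (x + y).
Proof. case=> A0 As _ _ ax ay. have := As _ _ ax (As _ _ A0 ay).
by rewrite sub0r opprK. Qed.

Lemma Qset_ideal (A : I -> Prop) q : two_sided_ideal A -> A q ->
  Qset (fun _ => True) q -> Qset A q.
Proof.
move=> hA aq [_ [u [_ [h1 h2]]]]; split => //; exists u; split => //.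
case: hA => A0 As Al Ar.
have e : u + q = u ** q by apply/subr0_eq.
have -> : u = u ** q - q by rewrite -e addrK.
exact: As (Al _ _ aq) aq.
Qed.
End H.

Theorem theorem3p2 (I : genRing) (A : I -> Prop) :
  quasipolar_ring (fun _ : I => True) ->
  two_sided_ideal A ->
  quasipolar_ring A.
Proof.
move=> hI hA a aa.
have [p [[_ hc] [pp [hq hqn]]]] := hI a Logic.I.
have hA' := hA; case: hA' => A0 As Al Ar.
have aap : A (gr_mul a p) by exact: Ar.
have ap : A p.
  case: hq => _ [u [_ [h1 _]]].
  have e : u + (a + p) = gr_mul u (a + p) by apply/subr0_eq.
  have e2 : gr_mul (u + (a + p)) p = gr_mul (gr_mul u (a + p)) p by rewrite e.
  rewrite -gr_mulA !gr_mulDl !gr_mulDr pp in e2.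
  have -> : p = gr_mul u (gr_mul a p) - gr_mul a p.
    apply/eqP; rewrite eq_sym subr_eq; apply/eqP.
    by apply: (addrI (gr_mul u p)); rewrite addrC -e2 (addrC p).
  exact: As (Al _ _ aap) aap.
exists p; split; [split=> // y [_ hy]; exact: hc|split=> //; split].
  apply: Qset_ideal => //; exact: ideal_add.
split; first exact: As.
move=> x [ax hx]; apply: Qset_ideal => //; first by apply: Ar; exact: As.
by case: hqn => _ H; apply: H.
Qed.
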